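(* In the allocation problem described in the context, let $\eta_1,\ldots,\eta_n$ be speed functions and let $a^\pi$ be the allocation produced by the extended SG mechanism with these speeds when every agent $i$ bids its true list $\pi_i$. Then $a^\pi$ is Pareto optimal: there is no allocation $a$ such that every agent $i$ weakly prefers $a_{i*}$ to $a^\pi_{i*}$ (i.e., $a_{i*}=a^\pi_{i*}$ or $a_{i*}>_i a^\pi_{i*}$) and some agent $i$ has $a_{i*}>_i a^\pi_{i*}$.
   Context: There are $m$ distinct divisible goods; good $j$ is available in amount $q_j>0$. There are $n$ agents; agent $i$ is to receive a total of $r_i>0$, with $\sum_j q_j=\sum_i r_i$. An allocation is a family $a_{ij}\ge 0$ with $\sum_j a_{ij}=r_i$ and $\sum_i a_{ij}=q_j$; $a_{i*}=(a_{i1},\ldots,a_{im})$ is agent $i$'s share. Each agent $i$ has a true preference list $\pi_i$, a permutation of the goods ($\pi_i(1)$ most preferred). Agent $i$ prefers $a_{i*}$ to $b_{i*}$, written $a_{i*}>_i b_{i*}$, if the leftmost nonzero coordinate of $(a_{i\pi_i(\ell)}-b_{i\pi_i(\ell)})_{\ell=1}^m$ is positive. A speed function for agent $i$ is a nonnegative integrable function $\eta_i:[0,1]\to\mathbb{R}_{\ge 0}$ with $\int_0^1\eta_i(t)\,dt=r_i$. The extended SG mechanism with speeds $\eta_1,\ldots,\eta_n$: each agent $i$ bids a permutation $\sigma_i$ of the goods; over time $t\in[0,1]$, each agent $i$ receives, at rate $\eta_i(t)$, the good highest in $\sigma_i$ among those not yet exhausted (a good is exhausted when the total amount handed out equals $q_j$;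 several agents may receive a good simultaneously; upon exhaustion, agents receiving it switch to their next non-exhausted good). The resulting allocation records the total amount of each good each agent receives. *)

(* Defs.v *)
From HB Require Import structures.
From mathcomp Require Import all_boot all_order all_algebra all_fingroup.
From mathcomp Require Import all_classical all_reals all_analysis.
Set Implicit Arguments. Unset Strict Implicit. Unset Printing Implicit Defensive.
Import Order.TTheory GRing.Theory Num.Theory.
Local Open Scope ring_scope.
Local Open Scope classical_set_scope.

Section Alloc.
Variables (R : realType) (n m : nat).

Definition is_allocation (q : 'I_m -> R) (r : 'I_n -> R)
    (a : 'I_n -> 'I_m -> R) : Prop :=
  [/\ forall i j, 0 <= a i j,
      forall i, \sum_(j < m) a i j = r i &
      forall j, \sum_(i < n) a i j = q j].

(* A preference list is a permutation p of the goods; p l is the good ranked at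
   position l (position 0 = most preferred).  lex_pref p x y : x >_p y, i.e. the
   leftmost nonzero coordinate of (x (p l) - y (p l))_l is positive. *)
Definition lex_pref (p : {perm 'I_m}) (x y : 'I_m -> R) : Prop :=
  exists l : 'I_m,
    (forall k : 'I_m, (k < l)%N -> x (p k) = y (p k)) /\ y (p l) < x (p l).

Definition eating (sigma : 'I_n -> {perm 'I_m}) (tau : 'I_m -> R)
    (i : 'I_n) (s : R) (j : 'I_m) : bool :=
  (s < tau j) &&
  [forall k : 'I_m, ((sigma i)^-1%g k < (sigma i)^-1%g j)%N ==> (tau k <= s)].

Definition received (eta : 'I_n -> R -> R) (sigma : 'I_n -> {perm 'I_m})
    (tau : 'I_m -> R) (i : 'I_n) (j : 'I_m) (t : R) : \bar R :=
  (\int[@lebesgue_measure R]_(s in `[0%R, t])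
      (eta i s * (eating sigma tau i s j)%:R)%:E)%E.

Definition consumed (eta : 'I_n -> R -> R) (sigma : 'I_n -> {perm 'I_m})
    (tau : 'I_m -> R) (j : 'I_m) (t : R) : \bar R :=
  (\sum_(i < n) received eta sigma tau i j t)%E.

Definition speed_function (r : 'I_n -> R) (eta : 'I_n -> R -> R) : Prop :=
  forall i,
    [/\ forall t, 0 <= t <= 1 -> 0 <= eta i t,
        (@lebesgue_measure R).-integrable `[0%R, 1%R] (EFin \o eta i) &
        (\int[@lebesgue_measure R]_(t in `[0%R, 1%R]) (eta i t)%:E
           = (r i)%:E)%E].

(* a is the allocation produced by the extended SG mechanism with speeds eta when
   agent i bids sigma i: there are exhaustion times tau j in [0,1], tau j being the
   first time at which the total amount of good j handed out reaches q j, where at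
   each time every agent receives, at rate eta i, its highest-ranked
   non-exhausted good; a i j is the total amount of good j agent i receives. *)
Definition SG_outcome (q : 'I_m -> R) (eta : 'I_n -> R -> R)
    (sigma : 'I_n -> {perm 'I_m}) (a : 'I_n -> 'I_m -> R) : Prop :=
  exists tau : 'I_m -> R,
    [/\ forall j, 0 <= tau j <= 1,
        forall j, consumed eta sigma tau j (tau j) = (q j)%:E,
        forall j t, 0 <= t -> t < tau j -> (consumed eta sigma tau j t < (q j)%:E)%E &
        forall i j, (a i j)%:E = received eta sigma tau i j 1].

Definition pareto_optimal (q : 'I_m -> R) (r : 'I_n -> R)
    (pi : 'I_n -> {perm 'I_m}) (b : 'I_n -> 'I_m -> R) : Prop :=
  ~ exists a : 'I_n -> 'I_m -> R,
      [/\ is_allocation q r a,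
          forall i, a i = b i \/ lex_pref (pi i) (a i) (b i) &
          exists i, lex_pref (pi i) (a i) (b i)].

End Alloc.

(* Main.v *)
Require Import Defs.
From HB Require Import structures.
From mathcomp Require Import all_boot all_order all_algebra all_fingroup.
From mathcomp Require Import all_classical all_reals all_analysis.
Import Order.TTheory GRing.Theory Num.Theory.
Local Open Scope ring_scope.

Lemma received_zero (R : realType) (n m : nat) (eta : 'I_n -> R -> R)
  (pi : 'I_n -> {perm 'I_m}) (tau : 'I_m -> R) i j k t :
  (((pi i)^-1)%g k < ((pi i)^-1)%g j)%N -> tau j <= tau k ->
  received eta pi tau i j t = 0%E.
Proof.
move=> hk hjk; rewrite /received; apply: integral0_eq => s _.
have H : ~~ eating pi tau i s j.
  apply/negP; rewrite /eating => /andP[hs /forallP /(_ k)]; rewrite hk /= => hks.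
  have hjs : tau j <= s := le_trans hjk hks.
  by move: hs; rewrite ltNge hjs.
rewrite (negbTE H) mulr0 //.
Qed.

Lemma received_tau (R : realType) (n m : nat) (eta : 'I_n -> R -> R)
  (pi : 'I_n -> {perm 'I_m}) (tau : 'I_m -> R) i j :
  0 <= tau j <= 1 ->
  received eta pi tau i j 1 = received eta pi tau i j (tau j).
Proof.
move=> /andP[h0 h1]; rewrite /received [LHS]integral_mkcond [RHS]integral_mkcond.
congr (integral _ _ _).
apply/funext => s; rewrite /patch.
have E : forall t : R, (s \in `[0, t]%classic) = (0 <= s <= t).
  by move=> t; apply/idP/idP; rewrite in_setE /= in_itv.
rewrite !E.
case: (boolP (0 <= s <= tau j)) => hs.
  have -> : 0 <= s <= 1 by case/andP: hs => a b; rewrite a (le_trans b h1).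
  by [].

case: (boolP (0 <= s <= 1)) => // /andP[hs0 hs1].
have hts : tau j < s by rewrite ltNge; move: hs; rewrite hs0.
have /negbTE -> : ~~ eating pi tau i s j.
  by rewrite /eating negb_and -leNgt ltW.
by rewrite mulr0.
Qed.

Theorem theorem5 (R : realType) (n m : nat) (q : 'I_m -> R) (r : 'I_n -> R)
    (pi : 'I_n -> {perm 'I_m}) (eta : 'I_n -> R -> R) (api : 'I_n -> 'I_m -> R) :
  (forall j, 0 < q j) ->
  (forall i, 0 < r i) ->
  \sum_(j < m) q j = \sum_(i < n) r i ->
  speed_function r eta ->
  SG_outcome q eta pi api ->
  pareto_optimal q r pi api.
Proof.
move=> _ _ _ _ [tau [tau01 tauq _ apiE]] [a [[a0 arow acol] weak [i0 strict]]].
have sumapi : forall j, \sum_(i < n) api i j = q j.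
  move=> j; apply: EFin_inj; rewrite -sumEFin.
  rewrite (eq_bigr (fun i => received eta pi tau i j (tau j))); last first.
    by move=> i _; rewrite apiE received_tau.
  exact: tauq.
have step : forall j, (forall k, tau k < tau j -> forall i, a i k = api i k) ->
    forall i, a i j = api i j.
  move=> j IH.
  have ge : forall i, api i j <= a i j.
    move=> i.
    case: (pickP (fun k => ((pi i)^-1%g k < (pi i)^-1%g j)%N && (tau j <= tau k))) =>
      [k /andP[hk1 hk2] | hno].
      have -> : api i j = 0.
        by apply: EFin_inj; rewrite apiE (@received_zero _ _ _ eta pi tau i j k 1 hk1 hk2).
      exact: a0.
    have above : forall l : 'I_m, (l < (pi i)^-1%g j)%N -> a i (pi i l) = api i (pi i l).
      move=> l hl; apply: IH; move: (hno (pi i l)); rewrite permK hl /= => h.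
      by rewrite ltNge h.
    case: (weak i) => [-> // | [l [hl hlt]]].
    case: (ltngtP l ((pi i)^-1%g j)) => hlj.
    - by move: hlt; rewrite above // ltxx.
    - by have := hl _ hlj; rewrite permKV => ->.
    - have e : l = (pi i)^-1%g j := val_inj hlj.
      by move: hlt; rewrite e permKV => /ltW.
  move=> i; apply/eqP; rewrite -subr_eq0; apply/eqP.
  apply: (@psumr_eq0P _ _ predT (fun i => a i j - api i j)) => //.
    by move=> i1 _; rewrite subr_ge0.
  by rewrite sumrB /= acol sumapi subrr.
have eqa : forall j i, a i j = api i j.
  suff H : forall N j, (#|[set k | (tau k < tau j)%R]| <= N)%N -> forall i, a i j = api i j.
    by move=> j; apply: (H _ j (leqnn _)).
  elim=> [|N IHN] j hj; apply: step => k hk.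
    move: hj; rewrite leqn0 => /eqP/cards0_eq /setP /(_ k).
    by rewrite !inE hk.
  apply: IHN; rewrite -ltnS; apply: leq_trans hj; apply: proper_card.
  apply/properP; split.
    by apply/fintype.subsetP => x; rewrite !inE => hx; exact: lt_trans hx hk.
  by exists k; rewrite !inE ?hk // ltxx.
by case: strict => l [_]; rewrite eqa ltxx.
Qed.
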